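(* Let $d\in D^\times$ with $\rho(d)=d$, and let $F'\subseteq D$ be a subfield containing $F$, fixed pointwise by $\rho$, such that $F[d]|F$ and $F'|F$ are $F$-isomorphic. Then there is $g\in D^\times$ with $gF[d]\rho(g)=F'$. Moreover, if $d\notin F$, every $g\in D^\times$ with $gF[d]g^{-1}=F'$ satisfies $gF[d]\rho(g)=F'$.
   Context: $F$ is a non-archimedean local field of odd residue characteristic. $D$ is a non-split quaternion division algebra with centre $F$, and $\rho$ is an orthogonal anti-involution of $D$ (an $F$-linear involutive anti-automorphism with $3$-dimensional fixed space). *)

(* Defs.v *)
From HB Require Import structures.
From mathcomp Require Import all_boot all_order all_algebra all_field.
Set Implicit Arguments. Unset Strict Implicit. Unset Printing Implicit Defensive.
Import Order.TTheory GRing.Theory Num.Theory.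
Local Open Scope ring_scope.

(* ---------- Non-archimedean local fields, via a normalized discrete valuation.
   v x is only meaningful for x != 0 (v 0 is junk). *)
Definition discrete_valuation (F : fieldType) (v : F -> int) : Prop :=
  [/\ forall x y : F, x != 0 -> y != 0 -> v (x * y) = v x + v y,
      forall x y : F, x != 0 -> y != 0 -> x + y != 0 ->
         (v x <= v (x + y)) || (v y <= v (x + y))
    & exists pi : F, pi != 0 /\ v pi = 1].

Definition in_valring (F : fieldType) (v : F -> int) (x : F) : Prop :=
  x = 0 \/ 0 <= v x.
Definition in_maxideal (F : fieldType) (v : F -> int) (x : F) : Prop :=
  x = 0 \/ 0 < v x.

Definition v_complete (F : fieldType) (v : F -> int) : Prop :=
  forall u : nat -> F,
    (forall N : int, exists n0 : nat, forall m n : nat, (n0 <= m)%N -> (n0 <= n)%N ->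
        u m - u n = 0 \/ N <= v (u m - u n)) ->
    exists l : F, forall N : int, exists n0 : nat, forall n : nat, (n0 <= n)%N ->
        u n - l = 0 \/ N <= v (u n - l).

Definition finite_residue_field (F : fieldType) (v : F -> int) : Prop :=
  exists s : seq F, (forall r, r \in s -> in_valring v r) /\
    forall x, in_valring v x -> exists2 r, r \in s & in_maxideal v (x - r).

Definition nonarch_local_field (F : fieldType) (v : F -> int) : Prop :=
  [/\ discrete_valuation v, v_complete v & finite_residue_field v].

Definition odd_residue_char (F : fieldType) (v : F -> int) : Prop :=
  ~ in_maxideal v (2%:R : F).

Definition quaternion_division_algebra (F : fieldType) (D : falgType F) : Prop :=
  [/\ \dim {: D} = 4%N,
      (forall x : D, x != 0 -> x \is a GRing.unit)
    & forall z : D, (forall x : D, z * x = x * z) -> z \in (1%VS : {vspace D})].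

Definition orthogonal_anti_involution (F : fieldType) (D : falgType F)
    (rho : 'End(D)) : Prop :=
  [/\ forall x y : D, rho (x * y) = rho y * rho x,
      forall x : D, rho (rho x) = x
    & \dim (fixedSpace rho) = 3%N].

Definition is_subfield (F : fieldType) (D : falgType F) (K : {vspace D}) : Prop :=
  [/\ (1 : D) \in K,
      forall x y : D, x \in K -> y \in K -> x * y \in K,
      forall x y : D, x \in K -> y \in K -> x * y = y * x
    & forall x : D, x \in K -> x != 0 -> x \is a GRing.unit /\ x^-1 \in K].

Definition F_isomorphic (F : fieldType) (D : falgType F) (E K : {vspace D}) : Prop :=
  exists f : 'End(D), [/\ ahom_in E f, {in E &, injective f} & (f @: E)%VS = K].

Definition twisted_eq (F : fieldType) (D : falgType F) (g h : D) (E K : {vspace D}) : Prop :=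
  forall y : D, y \in K <-> exists2 x : D, x \in E & y = g * x * h.

(* Main.v *)
Require Import Defs.
From HB Require Import structures.
From mathcomp Require Import all_boot all_order all_algebra all_field.
From Stdlib Require Import Classical.
Set Implicit Arguments. Unset Strict Implicit.
Import GRing.Theory.
Local Open Scope ring_scope.

Lemma fieldD (F : fieldType) (D : falgType F) (hD : quaternion_division_algebra D) :
  GRing.field_axiom D.
Proof. by case: hD. Qed.

Lemma full_cent (F : fieldType) (D : falgType F) (hD : quaternion_division_algebra D) (d : D) :
  (fullv <= 'C[d])%VS -> d \in (1%VS : {vspace D}).
Proof.
case: hD => _ _ hc sub; apply: hc => x.
by move: (subvP sub x (memvf x)) => /cent1vP ->.
Qed.

Lemma agenv_cent (F : fieldType) (D : falgType F) (d : D) (U : {vspace D}) :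
  (U <= 'C[d])%VS -> (agenv U <= 'C[d])%VS.
Proof.
move=> sU; apply: agenv_sub_modl; first by rewrite -memvE cent1v1.
by apply: prodv_sub.
Qed.

Lemma K_cent (F : fieldType) (D : falgType F) (d : D) :
  (<<1%VS; d>> <= 'C[d])%VS.
Proof. by apply: agenv_cent; rewrite subv_add -!memvE cent1v1 cent1v_id. Qed.

Lemma dimK2 (F : fieldType) (D : falgType F) (hD : quaternion_division_algebra D) (d : D)
  (hd : d \notin (1%VS : {vspace D})) :
  \dim <<1%VS; d>>%VS = 2%N /\ <<1%VS; d>>%VS = (1 + <[d]>)%VS.
Proof.
have hD4 : \dim {: D} = 4%N by case: hD.
set U := (1 + <[d]>)%VS; set K := <<1%VS; d>>%VS.
have sUK : (U <= K)%VS := sub_agenv U.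
have dU : (2 <= \dim U)%N.
  have s1U : (1 <= U)%VS := addvSl _ _.
  case: (dimv_leqif_eq s1U) => le eq; rewrite dimv1 in le eq.
  rewrite ltn_neqAle le andbT eq; apply: contra hd => /eqP ->.
  exact: subvP (addvSr 1 <[d]>) d (memv_line d).
have dK4 : (\dim K %| 4)%N.
  rewrite -hD4; have H := (@skew_field_dimS _ _ (fieldD hD) (agenv_aspace U) (aspacef D) (subvf _)); exact: H.
have dKle : (\dim K <= 4)%N by rewrite -hD4 dimvS ?subvf.
have dK2 : (2 <= \dim K)%N := leq_trans dU (dimvS sUK).
have dKn4 : \dim K != 4%N.
  apply/negP => /eqP e; apply: (negP hd); apply: (full_cent hD).
  have /eqP <- : K == fullv by rewrite eqEdim subvf e hD4.
  exact: K_cent.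
have dK : \dim K = 2%N.
  move: dK4 dKle dK2 dKn4; case: (\dim K) => [|[|[|[|[|k]]]]] //.
split => //; apply/eqP; rewrite eq_sym eqEdim sUK dK dU //.
Qed.

Lemma cent_in_K (F : fieldType) (D : falgType F) (hD : quaternion_division_algebra D) (d : D)
  (hd : d \notin (1%VS : {vspace D})) (c : D) :
  c * d = d * c -> c \in <<1%VS; d>>%VS.
Proof.
move=> cd.
have hD4 : \dim {: D} = 4%N by case: hD.
set K := <<1%VS; d>>%VS; set L := <<K; c>>%VS.
have sKL : (K <= L)%VS := subv_adjoin K c.
have sLC : (L <= 'C[d])%VS.
  by apply: agenv_cent; rewrite subv_add K_cent -memvE; apply/cent1vP.
have [dK _] := dimK2 hD hd; rewrite -/K in dK.
have dKL : (\dim K %| \dim L)%N := @skew_field_dimS _ _ (fieldD hD) (agenv_aspace (1 + <[d]>)%VS) (agenv_aspace (K + <[c]>)%VS) sKL.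
have dL4 : (\dim L %| 4)%N.
  rewrite -hD4; have H := (@skew_field_dimS _ _ (fieldD hD) (agenv_aspace (K + <[c]>)%VS) (aspacef D) (subvf _)); exact: H.
have dLle : (\dim L <= 4)%N by rewrite -hD4 dimvS ?subvf.
have dLn4 : \dim L != 4%N.
  apply/negP => /eqP e; apply: (negP hd); apply: (full_cent hD).
  have /eqP <- : L == fullv by rewrite eqEdim subvf e hD4.
  exact: sLC.
have dL : \dim L = 2%N.
  move: dKL dL4 dLle dLn4; rewrite dK; case: (\dim L) => [|[|[|[|[|k]]]]] //.
have /eqP -> : K == L by rewrite eqEdim sKL dK dL.
exact: memv_adjoin.
Qed.
Lemma rho1 (F : fieldType) (D : falgType F) (rho : 'End(D))
  (hrho : orthogonal_anti_involution rho) : rho 1 = 1.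
Proof.
case: hrho => rhoM rhoK _.
have := rhoM (rho 1) 1; rewrite mulr1 rhoK mulr1; exact: esym.
Qed.

Lemma rhoV (F : fieldType) (D : falgType F) (rho : 'End(D))
  (hrho : orthogonal_anti_involution rho) (g : D) : g \is a GRing.unit ->
  rho g \is a GRing.unit /\ rho g^-1 = (rho g)^-1.
Proof.
move=> hg; have r1 := rho1 hrho; case: hrho => rhoM rhoK _.
have e1 : rho g * rho g^-1 = 1 by rewrite -rhoM mulVr.
have e2 : rho g^-1 * rho g = 1 by rewrite -rhoM mulrV.
have u : rho g \is a GRing.unit by apply/unitrP; exists (rho g^-1).
split => //.
by rewrite -[RHS]mulr1 -e1 mulKr.
Qed.

Lemma part2 (F : fieldType) (D : falgType F) (rho : 'End(D))
    (hD : quaternion_division_algebra D) (hrho : orthogonal_anti_involution rho)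
    (d : D) (hdrho : rho d = d)
    (F' : {vspace D})
    (hF'rho : forall x : D, x \in F' -> rho x = x)
    (hd : d \notin (1%VS : {vspace D})) (g : D) (hg : g \is a GRing.unit)
    (ht : twisted_eq g g^-1 <<1%VS; d>>%VS F') :
    twisted_eq g (rho g) <<1%VS; d>>%VS F'.
Proof.
have [ru rV] := rhoV hrho hg.
have rhoM : forall x y, rho (x * y) = rho y * rho x by case: hrho.
set K := <<1%VS; d>>%VS.
have dK : d \in K := memv_adjoin _ _.
have gF : g * d * g^-1 \in F' by apply/(ht _); exists d.
have h := hF'rho _ gF.
rewrite rhoM rhoM hdrho rV in h.
set r := rho g in h ru rV *.
have e1 : d * r = r * (g * d * g^-1) by rewrite -h mulrA mulrA mulrV // mul1r.
set c := r * g.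
have cd : c * d = d * c.
  by rewrite /c mulrA e1 -!mulrA mulVr // mulr1.
have cK : c \in K by apply: cent_in_K.
have cu : c \is a GRing.unit by rewrite /c unitrMr.
have cVK : c^-1 \in K by rewrite memvV.
have rc : r = c * g^-1 by rewrite /c mulrK.
clearbody c r; subst r.
move=> y; split.
  move=> /(ht y) [x hx ->]; exists (x * c^-1); first exact: memvM.
  by rewrite !mulrA divrK.
move=> [x hx ->]; apply/(ht _); exists (x * c); first exact: memvM.
by rewrite !mulrA.
Qed.
Lemma abel (V : zmodType) (A B C E : V) : A + B - C - (A + E - C) = B - E.
Proof. by rewrite opprB addrA addrNK opprD addrA (addrC A B) addrK. Qed.

Lemma key_eq (F : fieldType) (D : falgType F) (d e x : D) (a b : F) :
  d * d = a *: 1 + b *: d -> e * e = a *: 1 + b *: e ->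
  e * (e * x + x * d - b *: x) = (e * x + x * d - b *: x) * d.
Proof.
move=> hd he.
rewrite mulrBr mulrDr mulrA he mulrBl mulrDl mulrDl -(mulrA x d d) hd mulrDr.
rewrite mulr_algl mulr_algr -!scalerAl -!scalerAr !mulrA.
rewrite addrA addrK (addrAC (a *: x)) addrK addrC //.
Qed.


Theorem lemma2p2 (F : fieldType) (v : F -> int) (D : falgType F) (rho : 'End(D))
    (hF : nonarch_local_field v) (hodd : odd_residue_char v)
    (hD : quaternion_division_algebra D) (hrho : orthogonal_anti_involution rho)
    (d : D) (hdu : d \is a GRing.unit) (hdrho : rho d = d)
    (F' : {vspace D}) (hF' : is_subfield F')
    (hF'rho : forall x : D, x \in F' -> rho x = x)
    (hiso : F_isomorphic <<1%VS; d>>%VS F') :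
  (exists2 g : D, g \is a GRing.unit & twisted_eq g (rho g) <<1%VS; d>>%VS F') /\
  (d \notin (1%VS : {vspace D}) ->
     forall g : D, g \is a GRing.unit ->
       twisted_eq g g^-1 <<1%VS; d>>%VS F' ->
       twisted_eq g (rho g) <<1%VS; d>>%VS F').
Proof.
split; last by move=> hd g hg ht; apply: part2.
have [f [fhom finj fim]] := hiso.
have [fM f1] := ahom_inP fhom.
have r1 := rho1 hrho.
have dK : d \in <<1%VS; d>>%VS := memv_adjoin _ _.
case: (boolP (d \in (1%VS : {vspace D}))) => hd.
  have sK1 : (<<1%VS; d>> <= 1)%VS.
    apply: agenv_sub_modl => //; rewrite prodv1 subv_add subvv -memvE //.
  exists 1; first exact: unitr1.
  rewrite r1 => y; rewrite -fim; split.
    move=> /memv_imgP [x hx ->]; exists x => //.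
    have /vlineP [k ->] := subvP sK1 x hx.
    by rewrite linearZ /= f1 mul1r mulr1.
  move=> [x hx ->]; rewrite mul1r mulr1.
  have /vlineP [k ek] := subvP sK1 x hx.
  have -> : x = f x by rewrite ek linearZ /= f1.
  exact: memv_img.
have [K2 Keq] := dimK2 hD hd.
have dd : d * d \in (1 + <[d]>)%VS by rewrite -Keq memvM.
have [u hu [w hw dde]] := memv_addP dd.
have [a ea] := vlineP _ _ hu; have [b eb] := vlineP _ _ hw.
rewrite ea eb in dde; clear u w hu hw ea eb.
set e := f d.
have eF : e \in F' by rewrite -fim memv_img.
have ee : e * e = a *: 1 + b *: e by rewrite -fM // dde linearD !linearZ /= f1.
have [x0 hx0] : exists x0, x0 * d != d * x0.
  apply: NNPP => hn; apply: (negP hd); case: hD => _ _ hc; apply: hc => x.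
  have := not_ex_all_not _ _ hn x => /negP/negPn/eqP ->; done.
set gx := fun x => e * x + x * d - b *: x.
have [g [gnz ge]] : exists g, g != 0 /\ e * g = g * d.
  case: (eqVneq (gx 1) 0) => h1.
    exists (gx x0); split; last exact: (key_eq x0 dde ee).
    have -> : gx x0 = x0 * d - d * x0.
      rewrite -[gx x0]subr0 -(mul0r x0) -h1 /gx mulr1 mul1r.
      by rewrite !mulrBl !mulrDl -scalerAl mul1r abel.
    by rewrite subr_eq0.
  by exists (gx 1); split => //; exact: (key_eq 1 dde ee).
have gu : g \is a GRing.unit := fieldD hD gnz.
have gdg : g * d * g^-1 = e by rewrite -ge mulrK.
have conj : forall x, x \in <<1%VS; d>>%VS -> g * x * g^-1 = f x.
  move=> x; rewrite Keq => /memv_addP [u hu [w hw ->]].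
  have [al ->] := vlineP _ _ hu; have [be ->] := vlineP _ _ hw.
  rewrite linearD !linearZ /= f1 mulrDr mulrDl -!scalerAr -!scalerAl mulr1 divrr //.
  by rewrite gdg.
exists g => //; apply: part2 => // y; rewrite -fim; split.
  by move=> /memv_imgP [x hx ->]; exists x; rewrite ?conj.
by move=> [x hx ->]; rewrite conj // memv_img.
Qed.
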